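(* Let $\mathcal{C}$ be a binary linear code with minimum distance $d(\mathcal{C}) \ge 3$. Then $$\rho(\mathcal{C}) \le \binom{r(\mathcal{C})}{1} + \binom{r(\mathcal{C})}{2} + \cdots + \binom{r(\mathcal{C})}{d(\mathcal{C})-2}.$$
   Context: A parity-check matrix for a linear code $\mathcal{C}$ is any matrix (possibly with linearly dependent rows) whose rows span the dual code $\mathcal{C}^\perp$. $d(\mathcal{C})$ is the minimum Hamming distance. For a parity-check matrix $H$, the stopping distance $s(H)$ is the largest integer such that for every set of $s(H)-1$ or fewer columns of $H$, the projection of $H$ onto those columns contains at least one row of Hamming weight exactly one. The redundancy $r(\mathcal{C})$ is the minimum number of rows of a parity-check matrix for $\mathcal{C}$. The stopping redundancy $\rho(\mathcal{C})$ is the smallest number of rows of a parity-check matrix $H$ for $\mathcal{C}$ with $s(H) = d(\mathcal{C})$. *)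

(* Defs.v *)
From mathcomp Require Import all_boot all_order all_algebra.
Set Implicit Arguments. Unset Strict Implicit. Unset Printing Implicit Defensive.
Import GRing.Theory.
Local Open Scope ring_scope.

Definition codeword (k n : nat) (G : 'M['F_2]_(k, n)) (c : 'rV['F_2]_n) : Prop :=
  (c <= G)%MS.

Definition dual_word (k n : nat) (G : 'M['F_2]_(k, n)) (u : 'rV['F_2]_n) : Prop :=
  forall c, codeword G c -> c *m u^T = 0.

Definition wt (n : nat) (c : 'rV['F_2]_n) : nat := #|[set j | c 0 j != 0]|.

Definition is_min_dist (k n : nat) (G : 'M['F_2]_(k, n)) (d : nat) : Prop :=
  (exists c, [/\ codeword G c, c != 0 & wt c = d]) /\
  (forall c, codeword G c -> c != 0 -> (d <= wt c)%N).

Definition parity_check (k n m : nat) (G : 'M['F_2]_(k, n)) (H : 'M['F_2]_(m, n))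
  : Prop := forall u : 'rV['F_2]_n, (u <= H)%MS <-> dual_word G u.

Definition is_redundancy (k n : nat) (G : 'M['F_2]_(k, n)) (r : nat) : Prop :=
  (exists H : 'M['F_2]_(r, n), parity_check G H) /\
  (forall m (H : 'M['F_2]_(m, n)), parity_check G H -> (r <= m)%N).

Definition stopping_set (m n : nat) (H : 'M['F_2]_(m, n)) (S : {set 'I_n}) : Prop :=
  forall i : 'I_m, #|[set j in S | H i j != 0]| != 1%N.

(* s(H) = s : s is the largest integer such that every (nonempty) set of at most
   s-1 columns is not a stopping set. *)
Definition stopping_distance_is (m n : nat) (H : 'M['F_2]_(m, n)) (s : nat) : Prop :=
  (forall S : {set 'I_n}, S != set0 -> (#|S| <= s.-1)%N -> ~ stopping_set H S) /\
  ~ (forall S : {set 'I_n}, S != set0 -> (#|S| <= s)%N -> ~ stopping_set H S).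

Definition is_stopping_redundancy (k n : nat) (G : 'M['F_2]_(k, n)) (d rho : nat)
  : Prop :=
  (exists H : 'M['F_2]_(rho, n), parity_check G H /\ stopping_distance_is H d) /\
  (forall m (H : 'M['F_2]_(m, n)),
      parity_check G H -> stopping_distance_is H d -> (rho <= m)%N).

(* Main.v *)
Require Import Defs.
From mathcomp Require Import all_boot all_order all_algebra.
Set Implicit Arguments. Unset Strict Implicit. Unset Printing Implicit Defensive.
Import GRing.Theory.
Local Open Scope ring_scope.

Lemma F2_01 (b : 'F_2) : b = (b != 0)%:R.
Proof. by case: b => [[|[|m]]] //= Hm; apply/val_inj. Qed.

Lemma wt_le (n : nat) (c : 'rV['F_2]_n) : (wt c <= n)%N.
Proof. by rewrite /wt; apply: leq_trans (max_card _) _; rewrite card_ord. Qed.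

Lemma wt_full (n : nat) (c : 'rV['F_2]_n) : wt c = n -> c = const_mx 1.
Proof.
move=> h; have: [set j | c 0 j != 0] = setT.
  apply/eqP; rewrite eqEcard subsetT /= cardsT card_ord; move: h; rewrite /wt => ->; by rewrite leqnn.
move=> /setP E; apply/matrixP => i j; rewrite ord1 !mxE (F2_01 (c 0 j)).
by move: (E j); rewrite !inE => ->.
Qed.

Lemma wt_mul_rowsub (r s : nat) (f : 'I_s -> 'I_r) (t : 'rV['F_2]_s) :
  (wt (t *m rowsub f 1%:M) <= wt t)%N.
Proof.
rewrite /wt; apply: leq_trans (leq_imset_card f _).
apply: subset_leq_card; apply/subsetP => i; rewrite inE mxE => nz.
have [b _ nzb] : exists2 b, true & t 0 b * rowsub f 1%:M b i != 0.
  apply/exists_inP; apply: contraR nz; rewrite negb_exists_in => /forall_inP H.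
  by apply/eqP; apply: big1 => b _; apply/eqP; rewrite -[_ == 0]negbK H.
move: nzb; rewrite !mxE; case: (f b =P i) => [<-|_] /=; last by rewrite mulr0 eqxx.
by rewrite mulr1 => tb; apply/imsetP; exists b; rewrite ?inE.
Qed.

Lemma core (r s : nat) (M : 'M['F_2]_(r, s)) : (0 < s)%N -> row_full M ->
  exists a : 'I_s, exists x : 'rV['F_2]_r,
    x *m M = delta_mx 0 a /\ (wt x <= maxn 1 s.-1)%N.
Proof.
case: s M => [|s] M // _ fM.
set f := fullrankfun fM.
have fB : row_full (rowsub f M) by apply: fullrowsub_full.
have tex : forall a : 'I_s.+1, exists t : 'rV_s.+1, delta_mx 0 a = t *m rowsub f M.
  by move=> a; apply/submxP; apply: submx_full.
suff [a [t [ht wt_t]]] : exists a : 'I_s.+1, exists t : 'rV_s.+1,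
    delta_mx 0 a = t *m rowsub f M /\ (wt t <= maxn 1 s)%N.
  exists a, (t *m rowsub f 1%:M); split.
    by rewrite -mulmxA -rowsubE ht.
  exact: leq_trans (wt_mul_rowsub _ _) wt_t.
case: s M fM f fB tex => [|s] M fM f fB tex.
  have [t ht] := tex ord0; exists ord0, t; split => //.
  exact: wt_le.
have [t1 h1] := tex ord0; have [t2 h2] := tex ord_max.
have := wt_le t1; rewrite leq_eqVlt ltnS => /orP [/eqP e1|l1]; last first.
  by exists ord0, t1; split => //; rewrite (leq_trans l1) // leq_maxr.
have := wt_le t2; rewrite leq_eqVlt ltnS => /orP [/eqP e2|l2]; last first.
  by exists ord_max, t2; split => //; rewrite (leq_trans l2) // leq_maxr.
exfalso; move: h1 h2; rewrite (wt_full e1) (wt_full e2) => <- /matrixP /(_ 0 ord0).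
by rewrite !mxE.
Qed.
Lemma orth_codeword (k n m : nat) (G : 'M['F_2]_(k, n)) (H0 : 'M['F_2]_(m, n))
  (y : 'rV['F_2]_n) : parity_check G H0 -> y *m H0^T = 0 -> codeword G y.
Proof.
move=> pc hy; rewrite /codeword submxE; apply/eqP/matrixP => i j.
have du : dual_word G (col j (cokermx G))^T.
  move=> c /submxP [w ->]; by rewrite trmxK colE -mulmxA (mulmxA G) mulmx_coker mul0mx mulmx0.
have /submxP [w hw] := (proj2 (pc _) du).
have : y *m col j (cokermx G) = 0.
  by rewrite -[col j _]trmxK hw trmx_mul mulmxA hy mul0mx.
by move=> /matrixP /(_ i 0); rewrite colE mulmxA -colE !mxE.
Qed.

Lemma restrict_full (k n m : nat) (G : 'M['F_2]_(k, n)) (H0 : 'M['F_2]_(m, n))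
  (d : nat) (S : {set 'I_n}) :
  is_min_dist G d -> parity_check G H0 -> (#|S| < d)%N ->
  row_full (colsub (fun a : 'I_#|S| => enum_val a) H0).
Proof.
move=> [_ md] pc ltS.
set g := (fun a : 'I_#|S| => enum_val a).
rewrite /row_full -mxrank_tr; apply: inj_row_free => v hv.
set y := v *m (colsub g 1%:M)^T.
have hy : y *m H0^T = 0.
  by rewrite /y -mulmxA -trmx_mul mulmx_colsub mulmx1.
have cy := orth_codeword pc hy.
have yj : forall j, y 0 j = \sum_a v 0 a * (j == g a)%:R.
  by move=> j; rewrite !mxE; apply: eq_bigr => a _; rewrite !mxE.
have y0 : y = 0.
  apply/eqP; apply/negPn/negP => ny.
  have := md _ cy ny; rewrite leqNgt => /negP; apply; apply: leq_ltn_trans ltS.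
  rewrite /wt; apply: subset_leq_card; apply/subsetP => j; rewrite inE yj => nz.
  have [a _ nza] : exists2 a, true & v 0 a * (j == g a)%:R != 0.
    apply/exists_inP; apply: contraR nz; rewrite negb_exists_in => /forall_inP H.
    by apply/eqP; apply: big1 => b _; apply/eqP; rewrite -[_ == 0]negbK H.
  move: nza; case: (j =P g a) => [->|_] /=; last by rewrite mulr0 eqxx.
  by rewrite /g enum_valP.
apply/matrixP => i a; rewrite ord1 mxE.
have := yj (g a); rewrite y0 mxE (bigD1 a) //= eqxx mulr1 big1 ?addr0 => [<- //|b nb].
by rewrite (inj_eq enum_val_inj) eq_sym (negbTE nb) mulr0.
Qed.

Lemma wt0 (n : nat) (c : 'rV['F_2]_n) : c != 0 -> (0 < wt c)%N.
Proof.
move=> cn0; rewrite /wt card_gt0; apply/set0Pn.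
apply/existsP; apply: contraR cn0; rewrite negb_exists => /forallP H.
apply/eqP/matrixP => i j; rewrite ord1 mxE.
by move: (H j); rewrite inE negbK => /eqP.
Qed.

Lemma count_le (r m : nat) :
  (#|[set T : {set 'I_r} | (0 < #|T| <= m)%N]| <= \sum_(1 <= i < m.+1) 'C(r, i))%N.
Proof.
elim: m => [|m IH].
  rewrite (_ : [set T : {set 'I_r} | _] = set0) ?cards0 //.
  by apply/setP => T; rewrite !inE; case: #|T|.
rewrite big_nat_recr //=.
apply: (@leq_trans #|[set T : {set 'I_r} | (0 < #|T| <= m)%N] :|: [set T : {set 'I_r} | #|T| == m.+1]|).
  apply: subset_leq_card; apply/subsetP => T; rewrite !inE.
  by case/andP => -> ; rewrite leq_eqVlt ltnS => /orP [->|->]; rewrite ?orbT.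
rewrite cardsU; apply: leq_trans (leq_subr _ _) _.
by rewrite leq_add // card_draws card_ord.
Qed.

Theorem theorem4 (k n : nat) (G : 'M['F_2]_(k, n)) (d r rho : nat) :
  is_min_dist G d -> (3 <= d)%N ->
  is_redundancy G r ->
  is_stopping_redundancy G d rho ->
  (rho <= \sum_(1 <= i < d.-1) 'C(r, i))%N.
Proof.
move=> md d3 [[H0 pc0] _] [_ minrho].
case: d d3 md minrho => [|[|[|d']]] // _ md minrho.
set Idx := [set T : {set 'I_r} | (0 < #|T| <= d'.+1)%N].
pose chi (T : {set 'I_r}) : 'rV['F_2]_r := \row_i ((i \in T)%:R).
pose H : 'M['F_2]_(#|Idx|, n) := \matrix_(a, j) (chi (enum_val a) *m H0) 0 j.
have rowH : forall a, row a H = chi (enum_val a) *m H0.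
  by move=> a; apply/rowP => j; rewrite !mxE.
have pcH : parity_check G H.
  have HH0 : (H <= H0)%MS by apply/row_subP => a; rewrite rowH submxMl.
  have H0H : (H0 <= H)%MS.
    apply/row_subP => i.
    have iI : [set i] \in Idx by rewrite inE cards1.
    rewrite (_ : row i H0 = row (enum_rank_in iI [set i]) H) ?row_sub //.
    rewrite rowH enum_rankK_in // rowE; congr (_ *m _); apply/rowP => l.
    by rewrite !mxE inE eqxx /= eq_sym.
  move=> u; split => hu.
    by apply/(pc0 u); apply: submx_trans HH0.
  by apply: submx_trans H0H; apply/(pc0 u).
apply: leq_trans (count_le r d'.+1); apply: (minrho _ H pcH); split.
- move=> S S0 Sle stop.
  have ltS : (#|S| < d'.+3)%N by apply: leq_ltn_trans Sle _.
  have fM := restrict_full md pc0 ltS.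
  have [a [x [hx wx]]] := core (eq_ind_r is_true S0 (card_gt0 S)) fM.
  set T := [set i | x 0 i != 0].
  have xn0 : x != 0.
    apply/eqP => x0; move: hx; rewrite x0 mul0mx => /matrixP /(_ 0 a).
    by rewrite !mxE !eqxx.
  have hT : T \in Idx.
    rewrite inE; apply/andP; split; first exact: wt0.
    apply: leq_trans wx _; rewrite geq_max /=.
    by rewrite -subn1 leq_subLR add1n.
  have chiT : x = chi T by apply/rowP => i; rewrite mxE inE; exact: F2_01.
  have := stop (enum_rank_in hT T).
  have -> : [set j in S | H (enum_rank_in hT T) j != 0] = [set enum_val a].
    apply/setP => j; rewrite !inE mxE enum_rankK_in // -chiT.
    case jS: (j \in S) => /=; last first.
      by apply/esym/negbTE; apply: contraFN jS => /eqP ->; apply: enum_valP.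
    rewrite -(enum_rankK_in jS jS).
    set c := enum_rank_in jS j.
    have -> : (x *m H0) 0 (enum_val c) = (x *m colsub (fun a : 'I_#|S| => enum_val a) H0) 0 c.
      by rewrite mulmx_colsub [RHS]mxE.
    rewrite hx mxE eqxx /=; case: (c =P a) => [->|ne]; first by rewrite eqxx.
    by apply/esym/negbTE; apply/eqP => /enum_val_inj.
  by rewrite cards1.
- move=> all; case: md => [[c [cc cn0 wc]] _].
  set S := [set j | c 0 j != 0].
  have S0 : S != set0 by rewrite -card_gt0; move: wc; rewrite /wt => ->.
  apply: (all S S0); first by move: wc; rewrite /wt => ->.
  move=> b; apply/eqP => h1.
  have du := (proj1 (pcH _)) (row_sub b H) c cc.
  move: du => /matrixP /(_ 0 0); rewrite !mxE.
  set A := [set j in S | H b j != 0].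
  rewrite (eq_bigr (fun j => if j \in A then 1 else 0)); last first.
    move=> j _.
    have -> : c 0 j * (row b H)^T j 0 = (c 0 j != 0)%:R * (H b j != 0)%:R.
      by rewrite !mxE -!F2_01.
    rewrite !inE; case: (c 0 j != 0); case: (H b j != 0) => /=;
      by rewrite ?mulr0 ?mulr1 ?mul0r.
  by rewrite -big_mkcond sumr_const h1 /= => /eqP; rewrite oner_eq0.
Qed.
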